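(* In the setting of the context, let $(e_i)_{i=1}^d$ be an orthonormal basis of $\mathbb C^d$ and assume: for each $a\in\mathcal A$ there is a deterministic map $f_a:\{1,\dots,d\}\to\{1,\dots,d\}$ such that for $\mathbb P$-a.e. $\omega$ and every $i$, $V_{a;\omega}e_i\in\mathbb C e_{f_a(i)}$, and $\langle V_{a;\omega}e_i,V_{a;\omega}e_j\rangle=0$ whenever $i\ne j$. Suppose there exist $L\in\mathbb N$ and $\varepsilon>0$ such that for $\mathbb P$-a.e. $\omega$ and all $i,j\in\{1,\dots,d\}$, $$\sum_{k=1}^d\min\{\overline P^{(L)}_\omega(i,k),\overline P^{(L)}_\omega(j,k)\}\ge\varepsilon,$$ where $P^{(L)}_{\omega,i}:=\mathbb Q_{\rho^{(i)};\omega}\circ A_{1:L}^{-1}\in\mathcal P(\mathcal A^L)$ with $\rho^{(i)}=|e_i\rangle\langle e_i|$, and $\overline P^{(L)}_\omega(i,k):=\sum_{u\in\mathcal A^L:f_u(i)=k}P^{(L)}_{\omega,i}(u)$. Then there exist, for each $(i,j)\in\{1,\dots,d\}^2$, $\mathcal F$-measurable maps $\omega\mapsto\kappa_{\omega;i,j}\in\mathcal P(\mathcal A^L\times\mathcal A^L)$ such that for $\mathbb P$-a.e. $\omega$ and all $i,j$, $\kappa_{\omega;i,j}$ is a coupling of $\mathbb Q_{\rho^{(i)};\omega}\circ A_{1:L}^{-1}$ and $\mathbb Q_{\rho^{(j)};\omega}\circ A_{1:L}^{-1}$ and $$\kappa_{\omega;i,j}\big(\{(u,v)\in\mathcal A^L\times\mathcal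 A^L: f_u(i)=f_v(j)\}\big)\ge\varepsilon$$ (with the same $L$ and $\varepsilon$).
   Context: Let $d\in\mathbb N$, $\mathcal A$ a finite set, $(\mathcal A^{\mathbb N},\Sigma)$ the sequence space with product $\sigma$-algebra, coordinates $A_n(\bar a)=a_n$ and $A_{1:L}=(A_1,\dots,A_L)$. $(\Omega,\mathcal F,\mathbb P)$ is a probability space and $\theta:\Omega\to\Omega$ is measurable and $\mathbb P$-preserving. For each $a\in\mathcal A$, $\omega\mapsto V_{a;\omega}\in M_d(\mathbb C)$ is measurable with $\sum_aV_{a;\omega}^*V_{a;\omega}=I$ $\mathbb P$-a.s.; $\mathcal T_{a;\omega}(X)=V_{a;\omega}XV_{a;\omega}^*$. For a density matrix $\rho$, the quenched law $\mathbb Q_{\rho;\omega}$ is the probability on $\Sigma$ with $\mathbb Q_{\rho;\omega}(A_1=a_1,\dots,A_n=a_n)=\operatorname{tr}[(\mathcal T_{a_n;\theta^n\omega}\circ\cdots\circ\mathcal T_{a_1;\theta\omega})(\rho)]$. For a word $u=(u_1,\dots,u_L)$, $f_u:=f_{u_L}\circ\cdots\circ f_{u_1}$. $\mathcal P(X)$ denotes the probability measures on a finite set $X$; a coupling of $\mu,\nu$ is a probability on the product with marginals $\mu$ and $\nu$. *)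

(* Defs.v *)
From HB Require Import structures.
From mathcomp Require Import all_boot all_order all_algebra.
From mathcomp Require Import all_classical all_reals all_analysis.
From mathcomp Require Import complex.
Set Implicit Arguments. Unset Strict Implicit. Unset Printing Implicit Defensive.
Import Order.TTheory GRing.Theory Num.Theory.
Local Open Scope ring_scope.

Section QT.
Variables (R : realType) (Omega : Type) (A : finType) (d : nat).

Definition adjmx (M : 'M[R[i]]_d) : 'M[R[i]]_d := map_mx (@conjc R) M^T.

Definition word (L : nat) := {ffun 'I_L -> A}.

(* (T_{u_L; theta^L w} o ... o T_{u_1; theta w})(rho), with
   T_{a;w}(X) = V_{a;w} X V_{a;w}^*  (index k : 'I_L is step k+1) *)
Definition evolve (V : A -> Omega -> 'M[R[i]]_d) (theta : Omega -> Omega)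
  (w : Omega) (rho : 'M[R[i]]_d) (L : nat) (u : word L) : 'M[R[i]]_d :=
  foldl (fun X (k : 'I_L) =>
           let M := V (u k) (iter k.+1 theta w) in M *m X *m adjmx M)
        rho (enum 'I_L).

(* Q_{rho;w}(A_{1:L} = u) = tr[(T_{u_L;theta^L w} o ... o T_{u_1;theta w})(rho)]
   (this trace is real; we take its real part as a real number) *)
Definition word_prob V theta w rho L (u : word L) : R :=
  complex.Re (\tr (evolve V theta w rho u)).

Definition fword (f : A -> 'I_d -> 'I_d) L (u : word L) (i : 'I_d) : 'I_d :=
  foldl (fun x (k : 'I_L) => f (u k) x) i (enum 'I_L).

(* rho^(i) = |e_i><e_i|, where e_i is the i-th column of E *)
Definition ketbra (E : 'M[R[i]]_d) (i : 'I_d) : 'M[R[i]]_d :=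
  col i E *m map_mx (@conjc R) (col i E)^T.

Definition Pbar V theta w (E : 'M[R[i]]_d) f L (i k : 'I_d) : R :=
  \sum_(u : word L | fword f u i == k) word_prob V theta w (ketbra E i) u.

End QT.

(* Main.v *)
Require Import Defs.
From HB Require Import structures.
From mathcomp Require Import all_boot all_order all_algebra.
From mathcomp Require Import all_classical all_reals all_analysis.
From mathcomp Require Import complex.
Import Order.TTheory GRing.Theory Num.Theory.
Local Open Scope ring_scope.
Local Open Scope classical_set_scope.

Section Cpl.
Variables (R : realFieldType) (I J K : finType).

Definition clsum (I' : finType) (p : I' -> R) (c : I' -> K) (k : K) : R :=
  \sum_(u | c u == k) p u.
Arguments clsum {I'}.

Definition cplM (p : I -> R) (q : J -> R) (cp : I -> K) (cq : J -> K) : R :=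
  \sum_k Num.min (clsum p cp k) (clsum q cq k).

Definition cpl (p : I -> R) (q : J -> R) (cp : I -> K) (cq : J -> K)
  (uv : I * J) : R :=
  let mm k := Num.min (clsum p cp k) (clsum q cq k) in
  let M := cplM p q cp cq in
  let r u := p u - p u * mm (cp u) / clsum p cp (cp u) in
  let s v := q v - q v * mm (cq v) / clsum q cq (cq v) in
  (if cp uv.1 == cq uv.2 then (p uv.1 * mm (cp uv.1) / clsum p cp (cp uv.1))
     * (q uv.2 / clsum q cq (cq uv.2)) else 0)
  + r uv.1 * s uv.2 / (1 - M).

Lemma clsum_ge0 {I' : finType} (p : I' -> R) c k :
  (forall u, 0 <= p u) -> 0 <= clsum p c k.
Proof. by move=> p0; apply: sumr_ge0. Qed.

Lemma clsum_tot {I' : finType} (p : I' -> R) c :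
  \sum_k clsum p c k = \sum_u p u.
Proof.
by rewrite (partition_big c xpredT) //; apply: eq_bigr => k _.
Qed.

Lemma clsum_ge {I' : finType} (p : I' -> R) c u :
  (forall u, 0 <= p u) -> p u <= clsum p c (c u).
Proof.
move=> p0; rewrite /clsum (bigD1 u) //= lerDl; apply: sumr_ge0 => *; exact: p0.
Qed.

Lemma clsum_weighted {I' : finType} (p : I' -> R) c (m : K -> R) :
  (forall k, clsum p c k = 0 -> m k = 0) ->
  \sum_u p u * m (c u) / clsum p c (c u) = \sum_k m k.
Proof.
move=> hm; rewrite (partition_big c xpredT) //; apply: eq_bigr => k _.
rewrite (eq_bigr (fun u => p u * (m k / clsum p c k))); last first.
  by move=> u /andP[_ /eqP ->]; rewrite mulrA.
rewrite -big_distrl /=.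
have [h0|nz] := eqVneq (clsum p c k) 0.
  by rewrite hm // mul0r mulr0.
by rewrite -/(clsum p c k) mulrCA mulfV // mulr1.
Qed.

Variables (p : I -> R) (q : J -> R) (cp : I -> K) (cq : J -> K).
Hypotheses (p0 : forall u, 0 <= p u) (q0 : forall v, 0 <= q v)
  (p1 : \sum_u p u = 1) (q1 : \sum_v q v = 1).

Let mm k := Num.min (clsum p cp k) (clsum q cq k).
Let M := cplM p q cp cq.
Let pb := clsum p cp.
Let qb := clsum q cq.

Lemma mm_ge0 k : 0 <= mm k.
Proof. by rewrite /mm le_min !clsum_ge0. Qed.

Lemma mm_p0 k : pb k = 0 -> mm k = 0.
Proof. by move=> h; rewrite /mm -/(pb k) h; apply: min_l; apply: clsum_ge0. Qed.

Lemma mm_q0 k : qb k = 0 -> mm k = 0.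
Proof. by move=> h; rewrite /mm -/(qb k) h; apply: min_r; apply: clsum_ge0. Qed.

Lemma M_le1 : M <= 1.
Proof.
rewrite /M /cplM -p1 -(clsum_tot p cp); apply: ler_sum => k _; by rewrite ge_min lexx.
Qed.

Lemma ratio_le1 (x y : R) : 0 <= x <= y -> x / y <= 1.
Proof.
case/andP=> x0 xy; have [->|y0] := eqVneq y 0; first by rewrite invr0 mulr0.
have yp : 0 < y by rewrite lt_def y0 (le_trans x0 xy).
by rewrite ler_pdivrMr // mul1r.
Qed.

Lemma r_ge0 u : 0 <= p u - p u * mm (cp u) / pb (cp u).
Proof.
rewrite subr_ge0 -mulrA ler_piMr // ratio_le1 // mm_ge0 /mm ge_min lexx //.
Qed.

Lemma s_ge0 v : 0 <= q v - q v * mm (cq v) / qb (cq v).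
Proof.
rewrite subr_ge0 -mulrA ler_piMr // ratio_le1 // mm_ge0 /mm ge_min lexx orbT //.
Qed.

Lemma sum_r : \sum_u (p u - p u * mm (cp u) / pb (cp u)) = 1 - M.
Proof. by rewrite sumrB p1 clsum_weighted //; exact: mm_p0. Qed.

Lemma sum_s : \sum_v (q v - q v * mm (cq v) / qb (cq v)) = 1 - M.
Proof. by rewrite sumrB q1 clsum_weighted //; exact: mm_q0. Qed.

Lemma cpl_ge0 uv : 0 <= cpl p q cp cq uv.
Proof.
rewrite /cpl /=; apply: addr_ge0.
  case: ifP => // _; apply: mulr_ge0.
  - by apply: mulr_ge0 => //; [apply: mulr_ge0 => //; exact: mm_ge0|
       rewrite invr_ge0 clsum_ge0].
  - by apply: mulr_ge0 => //; rewrite invr_ge0 clsum_ge0.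
apply: mulr_ge0; first exact: mulr_ge0 (r_ge0 _) (s_ge0 _).
by rewrite invr_ge0 subr_ge0 M_le1.
Qed.

Lemma cpl_diag u :
  \sum_v (if cp u == cq v then (p u * mm (cp u) / pb (cp u)) * (q v / qb (cq v)) else 0)
  = p u * mm (cp u) / pb (cp u).
Proof.
rewrite -big_mkcond /=.
rewrite (eq_bigr (fun v => (p u * mm (cp u) / pb (cp u)) * (q v / qb (cp u)))); last first.
  by move=> v /eqP ->.
rewrite -big_distrr -big_distrl /=.
rewrite (eq_bigl (fun v => cq v == cp u)); last by move=> v; rewrite eq_sym.
rewrite -/(clsum q cq (cp u)) -/(qb (cp u)).
have [h|nz] := eqVneq (qb (cp u)) 0.
  by rewrite mm_q0 // !(mulr0, mul0r).
by rewrite mulfV // mulr1.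
Qed.

Lemma cpl_left u : \sum_v cpl p q cp cq (u, v) = p u.
Proof.
rewrite /cpl /= big_split /= -/mm -/M -/pb -/qb cpl_diag.
rewrite (eq_bigr (fun v => (p u - p u * mm (cp u) / pb (cp u)) *
   ((q v - q v * mm (cq v) / qb (cq v)) / (1 - M)))); last first.
  by move=> v _; rewrite mulrA.
rewrite -big_distrr -big_distrl /= sum_s.
have [h|nz] := eqVneq (1 - M) 0.
  have r0 : p u - p u * mm (cp u) / pb (cp u) = 0.
    have := sum_r; rewrite h => /psumr_eq0P; apply => // *; exact: r_ge0.
  by rewrite r0 mul0r addr0; move/eqP: r0; rewrite subr_eq0 => /eqP <-.
by rewrite mulfV // mulr1 addrC subrK.
Qed.

Lemma cpl_right v : \sum_u cpl p q cp cq (u, v) = q v.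
Proof.
rewrite /cpl /= big_split /= -/mm -/M -/pb -/qb.
have -> : \sum_u (if cp u == cq v then (p u * mm (cp u) / pb (cp u)) * (q v / qb (cq v)) else 0)
   = q v * mm (cq v) / qb (cq v).
  rewrite -big_mkcond /=.
  rewrite (eq_bigr (fun u => (q v / qb (cq v)) * (p u * (mm (cq v) / pb (cq v))))); last first.
    by move=> u /eqP ->; rewrite mulrC !mulrA.
  rewrite -big_distrr -big_distrl /= -/(clsum p cp (cq v)) -/(pb (cq v)).
  have [h|nz] := eqVneq (pb (cq v)) 0.
    by rewrite mm_p0 // !(mulr0, mul0r).
  by rewrite (mulrCA (pb _)) mulfV // mulr1 mulrAC.
rewrite (eq_bigr (fun u => (q v - q v * mm (cq v) / qb (cq v)) / (1 - M) *
   (p u - p u * mm (cp u) / pb (cp u)))); last first.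
  by move=> u _; rewrite [RHS]mulrC mulrA.
rewrite -big_distrr /= sum_r.
have [h|nz] := eqVneq (1 - M) 0.
  have s0 : q v - q v * mm (cq v) / qb (cq v) = 0.
    have := sum_s; rewrite h => /psumr_eq0P; apply => // *; exact: s_ge0.
  by rewrite s0 mul0r mul0r addr0; move/eqP: s0; rewrite subr_eq0 => /eqP <-.
by rewrite divfK // addrC subrK.
Qed.

Lemma cpl_sum1 : \sum_uv cpl p q cp cq uv = 1.
Proof.
rewrite -p1 -(pair_bigA _ (fun u v => cpl p q cp cq (u, v))) /=.
by apply: eq_bigr => u _; rewrite cpl_left.
Qed.

Lemma cpl_match :
  M <= \sum_(uv | cp uv.1 == cq uv.2) cpl p q cp cq uv.
Proof.
apply: (@le_trans _ _ (\sum_(uv | cp uv.1 == cq uv.2)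
   (if cp uv.1 == cq uv.2 then (p uv.1 * mm (cp uv.1) / pb (cp uv.1))
     * (q uv.2 / qb (cq uv.2)) else 0))); last first.
  apply: ler_sum => uv _; rewrite /cpl lerDl; apply: mulr_ge0.
    exact: mulr_ge0 (r_ge0 _) (s_ge0 _).
  by rewrite invr_ge0 subr_ge0 M_le1.
rewrite big_mkcond /=.
rewrite (eq_bigr (fun uv => if cp uv.1 == cq uv.2 then (p uv.1 * mm (cp uv.1) / pb (cp uv.1))
     * (q uv.2 / qb (cq uv.2)) else 0)); last first.
  by move=> uv _; case: (cp uv.1 == cq uv.2).
rewrite -(pair_bigA _ (fun u v => if cp u == cq v then (p u * mm (cp u) / pb (cp u))
     * (q v / qb (cq v)) else 0)) /=.
under eq_bigr do rewrite cpl_diag.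
by rewrite clsum_weighted //; exact: mm_p0.
Qed.

End Cpl.
Arguments cpl {R I J K}.
Arguments cplM {R I J K}.
Arguments clsum {R K I'}.
Section Norm.
Variables (R : realFieldType) (I : finType).

Definition pnorm (p : I -> R) (u0 : I) (u : I) : R :=
  let S := \sum_v Num.max (p v) 0 in
  (Num.max (p u) 0 + (if u == u0 then Num.max (1 - S) 0 else 0)) / Num.max S 1.

Lemma pnorm_ge0 p u0 u : 0 <= pnorm p u0 u.
Proof.
rewrite /pnorm; apply: mulr_ge0; last by rewrite invr_ge0 le_max ler01 orbT.
apply: addr_ge0; first by rewrite le_max lexx orbT.
by case: ifP => // _; rewrite le_max lexx orbT.
Qed.

Lemma pnorm_sum1 p u0 : \sum_u pnorm p u0 u = 1.
Proof.
rewrite /pnorm -big_distrl /= big_split /= -big_mkcond big_pred1_eq.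
set S := \sum_v Num.max (p v) 0.
have S0 : 0 <= S by apply: sumr_ge0 => v _; rewrite le_max lexx orbT.
case: (boolP (1 <= S)) => S1; last rewrite -ltNge in S1.
  rewrite (max_r (_ : 1 - S <= 0)); last by rewrite subr_le0.
  rewrite (max_l S1) addr0 mulfV //; apply: lt0r_neq0; exact: lt_le_trans S1.
rewrite (max_l (_ : 0 <= 1 - S)); last by rewrite subr_ge0 ltW.
by rewrite (max_r (ltW S1)) addrC subrK invr1 mulr1.
Qed.

Lemma pnorm_id p u0 : (forall u, 0 <= p u) -> \sum_u p u = 1 ->
  pnorm p u0 = p.
Proof.
move=> p0 p1; apply/funext => u; rewrite /pnorm.
have -> : \sum_v Num.max (p v) 0 = 1.
  by rewrite -p1; apply: eq_bigr => v _; rewrite max_l.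
by rewrite subrr maxxx max_l // if_same addr0 maxxx invr1 mulr1.
Qed.

End Norm.
Arguments pnorm {R I}.

Lemma measurable_inv (R : realType) : measurable_fun [set: R] (@GRing.inv R).
Proof.
have -> : @GRing.inv R = (fun x => if x == 0 then 0 else x^-1).
  by apply/funext => x; case: eqP => // ->; rewrite invr0.
apply: measurable_fun_if => //.
- apply: measurable_realfun.measurable_fun_eqr => //.
have -> : [set: R] `&` (fun x : R => x == 0) @^-1` [set false] = ~` [set 0].
  apply/seteqP; split => x /=; first by move=> [_ /eqP].
  by move=> /eqP /negbTE ->.
apply: measurable_realfun.open_continuous_measurable_fun.
  apply: closed_openC. exact: closed_eq.
by move=> x; rewrite inE /= => /eqP x0; apply: inv_continuous.
Qed.

Section MF.
Context (R : realType) (d0 : measure_display) (Omega : measurableType d0).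
Local Notation mf f := (measurable_fun [set: Omega] (f : Omega -> R)).

Lemma mf_cst (c : R) : mf (fun _ => c).
Proof. exact: measurable_cst. Qed.
Lemma mf_add f g : mf f -> mf g -> mf (fun w => f w + g w).
Proof. exact: measurable_realfun.measurable_funD. Qed.
Lemma mf_opp f : mf f -> mf (fun w => - f w).
Proof. exact: measurable_realfun.measurable_funN. Qed.
Lemma mf_sub f g : mf f -> mf g -> mf (fun w => f w - g w).
Proof. exact: measurable_realfun.measurable_funB. Qed.
Lemma mf_mul f g : mf f -> mf g -> mf (fun w => f w * g w).
Proof. exact: measurable_realfun.measurable_funM. Qed.
Lemma mf_inv f : mf f -> mf (fun w => (f w)^-1).
Proof. by move=> mfh; exact: measurableT_comp (measurable_inv R) mfh. Qed.
Lemma mf_div f g : mf f -> mf g -> mf (fun w => f w / g w).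
Proof. by move=> ? ?; apply: mf_mul => //; exact: mf_inv. Qed.
Lemma mf_min f g : mf f -> mf g -> mf (fun w => Num.min (f w) (g w)).
Proof. exact: measurable_realfun.measurable_minr. Qed.
Lemma mf_max f g : mf f -> mf g -> mf (fun w => Num.max (f w) (g w)).
Proof. exact: measurable_realfun.measurable_maxr. Qed.
Lemma mf_sum (I : finType) (P : pred I) (F : I -> Omega -> R) :
  (forall i, mf (F i)) -> mf (fun w => \sum_(i | P i) F i w).
Proof.
move=> mF; have -> : (fun w => \sum_(i | P i) F i w) =
   (fun w => \sum_(i <- index_enum I) (if P i then F i w else 0)).
  by apply/funext => w; rewrite big_mkcond.
apply: measurable_sum => i; case: (P i) => //; exact: mf_cst.
Qed.

Lemma mf_cpl (I J K : finType) (p : Omega -> I -> R) (q : Omega -> J -> R)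
  (cp : I -> K) (cq : J -> K) uv :
  (forall u, mf (fun w => p w u)) -> (forall v, mf (fun w => q w v)) ->
  mf (fun w => cpl (p w) (q w) cp cq uv).
Proof.
move=> mp mq; rewrite /cpl /cplM /clsum /=.
have mpb k : mf (fun w => \sum_(u | cp u == k) p w u) by apply: mf_sum.
have mqb k : mf (fun w => \sum_(u | cq u == k) q w u) by apply: mf_sum.
have mM : mf (fun w => \sum_k Num.min (\sum_(u | cp u == k) p w u)
                                      (\sum_(u | cq u == k) q w u)).
  by apply: mf_sum => k; apply: mf_min.
apply: mf_add.
  case: (_ == _); last exact: mf_cst.
  apply: mf_mul; apply: mf_div => //; apply: mf_mul => //; exact: mf_min.
apply: mf_div; last exact: mf_sub (mf_cst _) mM.
apply: mf_mul; apply: mf_sub => //; apply: mf_div => //;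
  apply: mf_mul => //; exact: mf_min.
Qed.

Lemma mf_pnorm (I : finType) (p : Omega -> I -> R) u0 u :
  (forall u, mf (fun w => p w u)) -> mf (fun w => pnorm (p w) u0 u).
Proof.
move=> mp; rewrite /pnorm /=.
have mS : mf (fun w => \sum_v Num.max (p w v) 0).
  by apply: mf_sum => v; apply: mf_max => //; exact: mf_cst.
apply: mf_div; last by apply: mf_max => //; exact: mf_cst.
apply: mf_add; first by apply: mf_max => //; exact: mf_cst.
case: (_ == _); last exact: mf_cst.
apply: mf_max; [exact: mf_sub (mf_cst _) mS | exact: mf_cst].
Qed.

End MF.
Section Cx.
Variable R : rcfType.
Lemma ReD (x y : R[i]) : complex.Re (x + y) = complex.Re x + complex.Re y.
Proof. by case: x => a b; case: y => c e. Qed.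
Lemma ImD (x y : R[i]) : complex.Im (x + y) = complex.Im x + complex.Im y.
Proof. by case: x => a b; case: y => c e. Qed.
Lemma ReM (x y : R[i]) : complex.Re (x * y) = complex.Re x * complex.Re y - complex.Im x * complex.Im y.
Proof. by case: x => a b; case: y => c e. Qed.
Lemma ImM (x y : R[i]) : complex.Im (x * y) = complex.Re x * complex.Im y + complex.Im x * complex.Re y.
Proof. by case: x => a b; case: y => c e. Qed.
Lemma ReJ (x : R[i]) : complex.Re (conjc x) = complex.Re x.
Proof. by case: x => a b. Qed.
Lemma ImJ (x : R[i]) : complex.Im (conjc x) = - complex.Im x.
Proof. by case: x => a b. Qed.
End Cx.

Section CM.
Context (R : realType) (d0 : measure_display) (Omega : measurableType d0).
Local Notation mf f := (measurable_fun [set: Omega] (f : Omega -> R)).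

Definition cm (g : Omega -> R[i]) :=
  mf (fun w => complex.Re (g w)) /\ mf (fun w => complex.Im (g w)).

Lemma cm_cst c : cm (fun _ => c).
Proof. by split; exact: measurable_cst. Qed.

Lemma cm_add f g : cm f -> cm g -> cm (fun w => f w + g w).
Proof.
move=> [f1 f2] [g1 g2]; split.
  under eq_fun do rewrite ReD; exact: measurable_realfun.measurable_funD.
under eq_fun do rewrite ImD; exact: measurable_realfun.measurable_funD.
Qed.

Lemma cm_mul f g : cm f -> cm g -> cm (fun w => f w * g w).
Proof.
move=> [f1 f2] [g1 g2]; split.
  under eq_fun do rewrite ReM.
  by apply: measurable_realfun.measurable_funB; apply: measurable_realfun.measurable_funM.
under eq_fun do rewrite ImM.
by apply: measurable_realfun.measurable_funD; apply: measurable_realfun.measurable_funM.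
Qed.

Lemma cm_conj f : cm f -> cm (fun w => conjc (f w)).
Proof.
move=> [f1 f2]; split; first by under eq_fun do rewrite ReJ.
under eq_fun do rewrite ImJ; exact: measurable_realfun.measurable_funN.
Qed.

Lemma cm_sum (I : Type) (s : seq I) (F : I -> Omega -> R[i]) :
  (forall i, cm (F i)) -> cm (fun w => \sum_(i <- s) F i w).
Proof.
move=> mF; elim: s => [|a s IH].
  under eq_fun do rewrite big_nil; exact: cm_cst.
under eq_fun do rewrite big_cons; exact: cm_add.
Qed.

Context (d : nat).
Definition cmM (X : Omega -> 'M[R[i]]_d) := forall i j, cm (fun w => X w i j).

Lemma cmM_mul X Y : cmM X -> cmM Y -> cmM (fun w => X w *m Y w).
Proof.
move=> mX mY i j; under eq_fun do rewrite mxE.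
by apply: cm_sum => k; apply: cm_mul.
Qed.

Lemma cmM_adj X : cmM X -> cmM (fun w => adjmx (X w)).
Proof.
move=> mX i j; under eq_fun do rewrite /adjmx !mxE.
exact: cm_conj.
Qed.

Lemma cmM_cst M : cmM (fun _ => M).
Proof. by move=> i j; exact: cm_cst. Qed.

Lemma measurable_iter (theta : Omega -> Omega) n :
  measurable_fun setT theta -> measurable_fun setT (iter n theta).
Proof.
move=> mt; elim: n => [|n IH]; first exact: measurable_id.
have -> : iter n.+1 theta = theta \o iter n theta by apply/funext.
exact: measurableT_comp.
Qed.

Context (A : finType) (V : A -> Omega -> 'M[R[i]]_d) (theta : Omega -> Omega).
Hypotheses (mtheta : measurable_fun setT theta)
  (mV : forall a i j, measurable_fun setT (fun w => complex.Re (V a w i j)) /\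
                 measurable_fun setT (fun w => complex.Im (V a w i j))).

Lemma cmM_V a n : cmM (fun w => V a (iter n theta w)).
Proof.
move=> i j; have [h1 h2] := mV a i j; split.
  by move: (measurableT_comp h1 (measurable_iter theta n mtheta)).
by move: (measurableT_comp h2 (measurable_iter theta n mtheta)).
Qed.

Lemma cmM_foldl L (u : word A L) (s : seq 'I_L) X :
  cmM X -> cmM (fun w => foldl (fun X (k : 'I_L) =>
           let M := V (u k) (iter k.+1 theta w) in M *m X *m adjmx M) (X w) s).
Proof.
elim: s X => [|k s IH] X mX //=.
apply: (IH (fun w => V (u k) (iter k.+1 theta w) *m X w *m adjmx (V (u k) (iter k.+1 theta w)))).
apply: cmM_mul; first exact: cmM_mul (cmM_V _ _) mX.
exact: cmM_adj (cmM_V _ _).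
Qed.

Lemma mf_word_prob rho L (u : word A L) :
  mf (fun w => word_prob V theta w rho u).
Proof.
rewrite /word_prob /evolve.
have h := @cmM_foldl L u (enum 'I_L) _ (cmM_cst rho).
have : cm (fun w => \sum_(i <- index_enum 'I_d) (foldl (fun X (k : 'I_L) =>
           let M := V (u k) (iter k.+1 theta w) in M *m X *m adjmx M) rho (enum 'I_L)) i i).
  apply: cm_sum => i; exact: h.
by case.
Qed.

End CM.
Section Q.
Context (R : realType) (Omega : Type) (A : finType) (d : nat).
Context (V : A -> Omega -> 'M[R[i]]_d) (theta : Omega -> Omega).

Definition dag (y : 'cV[R[i]]_d) : 'rV[R[i]]_d := map_mx (@conjc R) y^T.

Lemma dagM (M : 'M[R[i]]_d) y : dag (M *m y) = dag y *m adjmx M.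
Proof. by rewrite /dag /adjmx trmx_mul map_mxM. Qed.

Lemma step_ket (M : 'M[R[i]]_d) y :
  M *m (y *m dag y) *m adjmx M = (M *m y) *m dag (M *m y).
Proof. by rewrite dagM !mulmxA. Qed.

Lemma foldl_ket L (u : word A L) w (s : seq 'I_L) y :
  exists z, foldl (fun X (k : 'I_L) =>
           let M := V (u k) (iter k.+1 theta w) in M *m X *m adjmx M) (y *m dag y) s
   = z *m dag z.
Proof.
elim: s y => [|k s IH] y /=; first by exists y.
by rewrite step_ket; apply: IH.
Qed.

Lemma Re_ge0 (x : R[i]) : 0 <= x -> 0 <= complex.Re x.
Proof. by rewrite lecE => /andP[_]. Qed.

Lemma tr_ket_ge0 z : 0 <= complex.Re (\tr (z *m dag z)).
Proof.
apply: Re_ge0; rewrite /mxtrace; apply: sumr_ge0 => k _.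
rewrite mxE; apply: sumr_ge0 => l _; rewrite /dag !mxE; exact: mulcJ_ge0.
Qed.

Lemma word_prob_ge0 w (E : 'M[R[i]]_d) i L (u : word A L) :
  0 <= word_prob V theta w (ketbra E i) u.
Proof.
rewrite /word_prob /evolve /ketbra.
have [z ->] := @foldl_ket L u w (enum 'I_L) (col i E).
exact: tr_ket_ge0.
Qed.

Lemma tr_ketbra (E : 'M[R[i]]_d) i : adjmx E *m E = 1%:M ->
  \tr (ketbra E i) = 1.
Proof.
move=> hE; rewrite /ketbra mxtrace_mulC /mxtrace big_ord1.
have := congr1 (fun (M : 'M[R[i]]_d) => M i i) hE; rewrite /= !mxE eqxx mulr1n => <-.
by apply: eq_bigr => k _; rewrite /adjmx !mxE.

Qed.


Definition wext L (u : word A L) (a : A) : word A L.+1 :=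
  [ffun k : 'I_L.+1 => oapp u a (insub (val k) : option 'I_L)].
Arguments wext {L}.

Lemma wext_widen L (u : word A L) a k :
  wext u a (widen_ord (leqnSn L) k) = u k.
Proof.
rewrite /wext ffunE /=; case: insubP => [k' _ hk|]; last by rewrite /= ltn_ord.
by congr (u _); apply: val_inj.
Qed.

Lemma wext_max L (u : word A L) a : wext u a ord_max = a.
Proof. by rewrite /wext ffunE /= insubN // ltnn. Qed.

Lemma sum_words_S L (F : word A L.+1 -> R[i]) :
  \sum_(u : word A L.+1) F u = \sum_(u : word A L) \sum_(a : A) F (wext u a).
Proof.
rewrite pair_bigA /=.
pose g (u : word A L.+1) := ([ffun k => u (widen_ord (leqnSn L) k)], u ord_max).
rewrite (reindex (fun p : word A L * A => wext p.1 p.2)) //.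
exists g.
  move=> [u a] _; rewrite /g wext_max; congr (_, _).
  by apply/ffunP => k; rewrite ffunE wext_widen.
move=> u _; apply/ffunP => k; rewrite /wext ffunE /=.
case: insubP => [k' _ hk|hk].
  by rewrite /= ffunE; congr (u _); apply: val_inj.
rewrite /=; congr (u _); apply: val_inj => /=.
by move: (ltn_ord k) hk; rewrite ltnS leq_eqVlt => /orP[/eqP ->|->].
Qed.

Lemma foldl_map' (T1 T2 S : Type) (f : S -> T2 -> S) (g : T1 -> T2) z s :
  foldl f z (map g s) = foldl (fun x y => f x (g y)) z s.
Proof. by elim: s z => [|a s IH] z //=. Qed.

Lemma evolve_wext w rho L (u : word A L) a :
  evolve V theta w rho (wext u a) =
  V a (iter L.+1 theta w) *m evolve V theta w rho u *m adjmx (V a (iter L.+1 theta w)).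
Proof.
rewrite /evolve enum_ordSr foldl_rcons foldl_map' wext_max /=.
congr (_ *m _ *m _); congr foldl.
by apply/funext => X; apply/funext => k; rewrite wext_widen.
Qed.

Lemma sum_evolve w rho L :
  (forall k, (k < L)%N -> \sum_(a : A) adjmx (V a (iter k.+1 theta w)) *m V a (iter k.+1 theta w) = 1%:M) ->
  \sum_(u : word A L) \tr (evolve V theta w rho u) = \tr rho.
Proof.
elim: L => [|L IH] hc.
  have e0 : enum 'I_0 = [::] by apply: size0nil; rewrite size_enum_ord.
  rewrite /evolve e0 /= sumr_const card_ffun card_ord expn0.
  by [].
rewrite sum_words_S -IH; last by move=> k hk; apply: hc; exact: ltnW.
apply: eq_bigr => u _.
under eq_bigr do rewrite evolve_wext mxtrace_mulC mulmxA.
by rewrite -raddf_sum /= -mulmx_suml hc // mul1mx.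
Qed.

End Q.

Section AE.
Context (R : realType) (d0 : measure_display) (Omega : measurableType d0).
Context (P : probability Omega R) (theta : Omega -> Omega).
Hypotheses (mtheta : measurable_fun setT theta)
  (pres : forall B : set Omega, measurable B -> P (theta @^-1` B) = P B).

Lemma pres_iter n (B : set Omega) : measurable B ->
  P (iter n theta @^-1` B) = P B.
Proof.
elim: n B => [|n IH] B mB //.
have -> : iter n.+1 theta @^-1` B = iter n theta @^-1` (theta @^-1` B) by [].
rewrite IH ?pres //.
by have := mtheta measurableT _ mB; rewrite setTI.
Qed.

Lemma ae_iter n (Q : Omega -> Prop) :
  {ae P, forall w, Q w} -> {ae P, forall w, Q (iter n theta w)}.
Proof.
case=> N [mN PN sub]; exists (iter n theta @^-1` N); split.
- by have := (@measurable_iter _ _ theta n mtheta) measurableT _ mN; rewrite setTI.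
- by rewrite pres_iter.
- by move=> w /= nQ; apply: sub.
Qed.

Lemma ae_ex (Q : Omega -> Prop) : {ae P, forall w, Q w} -> exists w, Q w.
Proof.
case=> N [mN PN sub]; apply: contrapT => hn.
have : P setT = 0.
  apply: (subset_measure0 measurableT mN) => // w _; apply: sub => /= hq.
  by apply: hn; exists w.
by rewrite probability_setT => /eqP; rewrite eqe oner_eq0.
Qed.

End AE.
Arguments ae_ex {R d0 Omega P Q}.
Arguments ae_iter {R d0 Omega P theta} mtheta pres n {Q}.

Lemma Re_sum (R : rcfType) (I : finType) (F : I -> R[i]) :
  complex.Re (\sum_i F i) = \sum_i complex.Re (F i).
Proof. elim/big_rec2: _ => // i x y _ h; by rewrite ReD h. Qed.

Theorem proposition5 (R : realType) (d0 : measure_display)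
  (Omega : measurableType d0) (P : probability Omega R)
  (theta : Omega -> Omega) (A : finType) (d : nat)
  (V : A -> Omega -> 'M[R[i]]_d) (E : 'M[R[i]]_d)
  (f : A -> 'I_d -> 'I_d) (L : nat) (eps : R) :
  measurable_fun setT theta ->
  (forall B : set Omega, measurable B -> P (theta @^-1` B) = P B) ->
  (forall a i j, measurable_fun setT (fun w => complex.Re (V a w i j)) /\
                 measurable_fun setT (fun w => complex.Im (V a w i j))) ->
  {ae P, forall w, \sum_(a : A) adjmx (V a w) *m V a w = 1%:M} ->
  adjmx E *m E = 1%:M ->
  {ae P, forall w, forall (a : A) (i : 'I_d),
      exists c : R[i], V a w *m col i E = c *: col (f a i) E} ->
  {ae P, forall w, forall (a : A) (i j : 'I_d), i != j ->
      map_mx (@conjc R) (V a w *m col i E)^T *m (V a w *m col j E) = 0} ->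
  0 < eps ->
  {ae P, forall w, forall i j : 'I_d,
      eps <= \sum_(k : 'I_d) Num.min (Pbar V theta w E f L i k)
                                     (Pbar V theta w E f L j k)} ->
  exists kappa : 'I_d -> 'I_d -> Omega -> (word A L * word A L) -> R,
    (forall i j uv, measurable_fun setT (fun w => kappa i j w uv)) /\
    (forall i j w, (forall uv, 0 <= kappa i j w uv) /\
                   \sum_(uv : word A L * word A L) kappa i j w uv = 1) /\
    {ae P, forall w, forall i j : 'I_d,
       (forall u : word A L, \sum_(v : word A L) kappa i j w (u, v)
                  = word_prob V theta w (ketbra E i) u) /\
       (forall v : word A L, \sum_(u : word A L) kappa i j w (u, v)
                  = word_prob V theta w (ketbra E j) v) /\
       eps <= \sum_(uv : word A L * word A L | fword f uv.1 i == fword f uv.2 j)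
                 kappa i j w uv}.
Proof.
move=> mtheta pres mV hcomp hE hf horth heps0 heps.
case: (pickP (fun _ : word A L => true)) => [u0 _ | hnone]; last first.
  have nod : 'I_d -> False.
    move=> i; have [w hw] := ae_ex heps; move: (hw i i).
    rewrite (eq_bigr (fun _ => 0)); last first.
      move=> k _; rewrite /Pbar big1 ?minxx // => u _.
      by move: (hnone u).
    by rewrite big1_eq leNgt heps0.
  exists (fun _ _ _ _ => 0); split; first by move=> i; case: (nod i).
  split; first by move=> i; case: (nod i).
  by apply: aeW => w i; case: (nod i).
pose p (i : 'I_d) w := fun u : word A L => word_prob V theta w (ketbra E i) u.
exists (fun i j w => cpl (pnorm (p i w) u0) (pnorm (p j w) u0)
                        (fun u => fword f u i) (fun v => fword f v j)).
split.
  move=> i j uv; apply: mf_cpl => u; apply: mf_pnorm => v;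
    exact: mf_word_prob.
split.
  move=> i j w; split.
    move=> uv; apply: cpl_ge0 => *; exact: pnorm_ge0 || exact: pnorm_sum1.
  by apply: cpl_sum1 => *; exact: pnorm_ge0 || exact: pnorm_sum1.
have hc : {ae P, forall w, forall n,
    \sum_(a : A) adjmx (V a (iter n theta w)) *m V a (iter n theta w) = 1%:M}.
  apply: ae_foralln => n; exact: (ae_iter mtheta pres n hcomp).
apply: filterS2 hc heps => w hcw hepsw i j.
have hp k : pnorm (p k w) u0 = p k w.
  apply: pnorm_id => [u|]; first exact: word_prob_ge0.
  rewrite /p /word_prob -Re_sum.
  rewrite (@sum_evolve _ _ _ _ V theta w _ L (fun k _ => hcw k.+1)).
  by rewrite tr_ketbra.
rewrite !hp.
have p0 k u : 0 <= p k w u by exact: word_prob_ge0.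
have p1 k : \sum_u p k w u = 1.
  by rewrite -(hp k); exact: pnorm_sum1.
split; first by move=> u; rewrite cpl_left.
split; first by move=> v; rewrite cpl_right.
apply: le_trans (hepsw i j) _.
apply: cpl_match => // *; by [exact: p0 | exact: p1].
Qed.
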